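(* Let $n\geq2$ and let $f$ be a hypercyclic vector for $W_n^{*}$. Then $\mathcal{N}^{\perp}\cap Z_f(W_n^{*})=\{0\}$.
   Context: $H^2$ denotes the Hardy space of analytic functions $f(z)=\sum_{j\ge0}\hat f(j)z^j$ on the open unit disk $\mathbb{D}$ with $\sum_{j}|\hat f(j)|^2<\infty$. For $n\in\mathbb{N}$, $W_n$ is the bounded operator on $H^2$ given by $W_nf(z)=(1+z+\cdots+z^{n-1})f(z^n)$ and $W_n^{*}$ is its adjoint; $f$ is hypercyclic for $W_n^*$ if its orbit $\{(W_n^* )^jf:j\in\mathbb{N}\}$ is dense. For an operator $T$ and vector $x$, $Z_x(T)=\{p(T)x: p \text{ a polynomial}\}$. For each integer $k\geq2$, $h_k(z)=\frac{1}{1-z}\log\left(\frac{1+z+\cdots+z^{k-1}}{k}\right)$ (holomorphic branch of the logarithm on $\mathbb{D}$, real at $z=0$), which lies in $H^2$; $\mathcal{N}=\mathrm{span}\{h_k:k\geq2\}$ and $\mathcal{N}^\perp$ is its orthogonal complement in $H^2$. *)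

(* Defs.v *)
From Stdlib Require Import Reals Lra List.
From Coquelicot Require Import Coquelicot.
Open Scope R_scope.

(* Elements of H^2 are identified with their Taylor coefficient sequences:
   f(z) = sum_j f^(j) z^j  <->  (fun j => f^(j)) : nat -> C. *)
Definition seqC := nat -> C.

Definition inH2 (a : seqC) : Prop := ex_series (fun j => (Cmod (a j)) ^ 2).

Definition H2norm (a : seqC) : R := sqrt (Series (fun j => (Cmod (a j)) ^ 2)).

Fixpoint csum (m : nat) (g : nat -> C) : C :=
  match m with
  | O => 0%C
  | S m' => (csum m' g + g m')%C
  end.

(* W_n f (z) = (1 + z + ... + z^{n-1}) f(z^n): on coefficients,
   (W_n a)(k) = a(k / n) (Euclidean quotient). *)
Definition Wn (n : nat) (a : seqC) : seqC := fun k => a (Nat.div k n).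

(* Its Hilbert-space adjoint on H^2: since <W_n a, b> = sum_j a(j) conj(sum_{r<n} b(nj+r)),
   (W_n^* b)(j) = sum_{r<n} b(n j + r). *)
Definition Wn_adj (n : nat) (b : seqC) : seqC :=
  fun j => csum n (fun r => b (n * j + r)%nat).

Definition hypercyclic (T : seqC -> seqC) (f : seqC) : Prop :=
  inH2 f /\
  forall g : seqC, inH2 g -> forall eps : R, 0 < eps ->
    exists j : nat, H2norm (fun i => (Nat.iter j T f i - g i)%C) < eps.

(* p(T) x for the polynomial p(X) = c_0 + c_1 X + ... + c_d X^d given by the
   coefficient list [c_0; ...; c_d]. *)
Fixpoint polyapp (T : seqC -> seqC) (cs : list C) (x : seqC) : seqC :=
  match cs with
  | nil => fun _ => 0%C
  | cons c cs' => fun i => (c * x i + polyapp T cs' (T x) i)%C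
  end.

(* Taylor coefficients of log((1 + z + ... + z^{k-1}) / k)
   = log(1 - z^k) - log(1 - z) - log k
   = -log k + sum_{m>=1} z^m / m - sum_{m>=1} z^{km} / m. *)
Definition logcoef (k m : nat) : R :=
  match m with
  | O => - ln (INR k)
  | S _ => / INR m - (if Nat.eqb (Nat.modulo m k) 0 then INR k / INR m else 0)
  end.

(* Taylor coefficients of h_k(z) = (1/(1-z)) log((1+...+z^{k-1})/k):
   partial sums of the coefficients above. *)
Definition hk (k : nat) : seqC := fun j => RtoC (sum_f_R0 (logcoef k) j).

(* g in N^perp: g in H^2 and g is orthogonal to every h_k, k >= 2
   (orthogonality to the span N is orthogonality to each generator).
   <g, h_k> = sum_j g(j) conj(h_k(j)), and h_k has real coefficients. *)
Definition inNperp (g : seqC) : Prop :=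
  inH2 g /\
  forall k : nat, (2 <= k)%nat -> is_series (fun j => (g j * Cconj (hk k j))%C) (RtoC 0).

(* Main.v *)
Require Import Defs.
From Stdlib Require Import Reals Lra Lia FunctionalExtensionality List.
From Coquelicot Require Import Coquelicot.
Open Scope R_scope.

Fixpoint rsum (m : nat) (g : nat -> R) : R :=
  match m with O => 0 | S m' => rsum m' g + g m' end.

Lemma rsum_ext m g1 g2 : (forall t, (t < m)%nat -> g1 t = g2 t) -> rsum m g1 = rsum m g2.
Proof. induction m; simpl; intros H; auto. rewrite IHm by (intros; apply H; lia). rewrite H by lia. auto. Qed.

Lemma rsum_shift d g : rsum (S d) g = g O + rsum d (fun t => g (S t)).
Proof. induction d; simpl in *. lra. rewrite IHd. lra. Qed.

Lemma ln_le_sub1 y : 0 < y -> ln y <= y - 1.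
Proof. intros Hy. rewrite <- (ln_exp (y-1)). apply ln_le; auto.
  pose proof (exp_ineq1_le (y-1)). lra. Qed.

Lemma ln_step_upper b : 0 < b -> ln (b+1) - ln b <= / b.
Proof. intros Hb. rewrite <- ln_div by lra.
  eapply Rle_trans. apply ln_le_sub1. apply Rdiv_lt_0_compat; lra.
  right. field. lra. Qed.

Lemma ln_step_lower b : 0 < b -> / (b+1) <= ln (b+1) - ln b.
Proof. intros Hb. assert (H := ln_le_sub1 (b/(b+1)) ltac:(apply Rdiv_lt_0_compat; lra)).
  rewrite ln_div in H by lra.
  assert (b/(b+1) - 1 = - / (b+1)) by (field; lra). lra. Qed.

Definition Wsum (a d : nat) : R := rsum d (fun t => / INR (a + 1 + t)).

Lemma window a d : (1 <= a)%nat ->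
  ln (INR a + INR d + 1) - ln (INR a + 1) <= Wsum a d <= ln (INR a + INR d) - ln (INR a).
Proof. intros Ha. assert (HA : 1 <= INR a) by (apply (le_INR 1); auto).
  unfold Wsum. induction d; simpl rsum.
  - simpl. replace (INR a + 0 + 1) with (INR a + 1) by lra. replace (INR a + 0) with (INR a) by lra. lra.
  - rewrite S_INR. rewrite plus_INR, plus_INR. simpl (INR 1).
    pose proof (pos_INR d).
    pose proof (ln_step_upper (INR a + INR d + 1) ltac:(lra)).
    pose proof (ln_step_lower (INR a + INR d) ltac:(lra)).
    replace (INR a + (INR d + 1) + 1) with (INR a + INR d + 1 + 1) by lra.
    replace (INR a + (INR d + 1)) with (INR a + INR d + 1) by lra.
    replace (INR a + 1 + INR d) with (INR a + INR d + 1) by lra. lra.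
Qed.

Lemma mod2_odd a : ((S (2*a)) mod 2 = 1)%nat.
Proof. replace (S (2*a)) with (1 + a*2)%nat by lia. rewrite Nat.Div0.mod_add. reflexivity. Qed.
Lemma mod2_even a : ((S (S (2*a))) mod 2 = 0)%nat.
Proof. replace (S (S (2*a))) with (0 + (S a)*2)%nat by lia. rewrite Nat.Div0.mod_add. reflexivity. Qed.

Lemma s_even a : sum_f_R0 (logcoef 2) (2*a) = - ln 2 + Wsum a a.
Proof. induction a.
  - change (2*0)%nat with 0%nat. unfold Wsum. simpl rsum. unfold sum_f_R0, logcoef. assert (INR 2 = 2) as -> by (simpl; lra). lra.
  - replace (2 * S a)%nat with (S (S (2*a))) by lia. rewrite tech5, tech5, IHa.
    unfold logcoef. rewrite mod2_odd, mod2_even. simpl Nat.eqb. cbv iota.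
    assert (E1 : Wsum a (S (S a)) = / INR (a+1) + Wsum (S a) (S a)).
    { unfold Wsum. rewrite rsum_shift. f_equal. { rewrite Nat.add_0_r. reflexivity. } apply rsum_ext. intros. f_equal. f_equal. lia. }
    assert (E2 : Wsum a (S (S a)) = Wsum a a + / INR (S (2*a)) + / INR (S (S (2*a)))).
    { unfold Wsum. simpl rsum. do 3 f_equal; f_equal; f_equal; lia. }
    assert (INR (S (S (2*a))) = 2 * INR (a+1)).
    { rewrite <- (mult_INR 2). f_equal. lia. }
    assert (0 < INR (a+1)) by (apply lt_0_INR; lia).
    rewrite H in *.
    replace (INR 2) with 2 by (simpl; lra).
    assert (Wsum (S a) (S a) = Wsum a a + / INR (S (2*a)) + / (2 * INR (a+1)) - / INR (a+1)) by lra.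
    assert (0 < INR (S (2*a))) by (apply lt_0_INR; lia).
    rewrite H1. field. repeat split; lra.
Qed.

Lemma ln2_bounds : 0 < ln 2 <= 1.
Proof. pose proof ln_lt_2. pose proof (ln_le_sub1 2 ltac:(lra)). lra. Qed.

Lemma h2_even_bound a : (1 <= a)%nat ->
  - / (2 * INR a + 1) <= sum_f_R0 (logcoef 2) (2*a) <= 0.
Proof. intros Ha. rewrite s_even. pose proof (window a a Ha) as [W1 W2].
  assert (HA : 1 <= INR a) by (apply (le_INR 1); auto).
  replace (ln (INR a + INR a)) with (ln 2 + ln (INR a)) in W2.
  2:{ rewrite <- ln_mult by lra. f_equal. lra. }
  pose proof (ln_step_upper (INR a + INR a + 1) ltac:(lra)).
  replace (ln (INR a + 1)) with (ln (INR a + INR a + 1 + 1) - ln 2) in W1.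
  2:{ replace (INR a + INR a + 1 + 1) with (2 * (INR a + 1)) by lra. rewrite ln_mult by lra. lra. }
  replace (2 * INR a + 1) with (INR a + INR a + 1) by lra. lra.
Qed.

Lemma h2_bound j : Rabs (sum_f_R0 (logcoef 2) j) <= 2 / (INR j + 1).
Proof. pose proof ln2_bounds.
  destruct (Nat.Even_or_Odd j) as [[a Ha]|[a Ha]]; subst j.
  - destruct a as [|a'].
    + change (2*0)%nat with 0%nat. unfold sum_f_R0, logcoef. assert (INR 2 = 2) as -> by (simpl; lra).
      simpl INR. rewrite Rabs_left by lra. lra.
    + pose proof (h2_even_bound (S a') ltac:(lia)). rewrite mult_INR.
      assert (1 <= INR (S a')) by (apply (le_INR 1); lia). simpl (INR 2).
      rewrite Rabs_left1 by lra.
      assert (/ (2 * INR (S a') + 1) <= 2 / ((1+1) * INR (S a') + 1)).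
      { unfold Rdiv. replace (1+1) with 2 by lra. assert (0 < / (2 * INR (S a') + 1)) by (apply Rinv_0_lt_compat; lra). lra. }
      lra.
  - replace (2*a+1)%nat with (S (2*a)) by lia. rewrite tech5.
    unfold logcoef at 2. rewrite mod2_odd. simpl Nat.eqb. cbv iota.
    rewrite S_INR, mult_INR. assert (INR 2 = 2) as E2 by (simpl; lra). rewrite E2.
    destruct a as [|a'].
    + change (2*0)%nat with 0%nat. unfold sum_f_R0, logcoef. rewrite E2. simpl INR.
      replace (2*0+1) with 1 by lra. rewrite Rinv_1. rewrite Rabs_right by lra. lra.
    + pose proof (h2_even_bound (S a') ltac:(lia)).
      assert (1 <= INR (S a')) by (apply (le_INR 1); lia).
      assert (0 < / (2 * INR (S a') + 1)) by (apply Rinv_0_lt_compat; lra).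
      rewrite Rabs_right by lra.
      assert (/ (2 * INR (S a') + 1) <= 2 / (2 * INR (S a') + 1 + 1)).
      { apply (Rmult_le_reg_l ((2 * INR (S a') + 1) * (2 * INR (S a') + 1 + 1))). nra.
        field_simplify; try lra. }
      lra.
Qed.


Lemma rsum_le m g1 g2 : (forall t, (t < m)%nat -> g1 t <= g2 t) -> rsum m g1 <= rsum m g2.
Proof. induction m; simpl; intros H. lra. pose proof (H m ltac:(lia)). pose proof (IHm ltac:(intros; apply H; lia)). lra. Qed.

Lemma rsum_plus m g1 g2 : rsum m (fun t => g1 t + g2 t) = rsum m g1 + rsum m g2.
Proof. induction m; simpl; lra. Qed.

Lemma rsum_scal m c g : rsum m (fun t => c * g t) = c * rsum m g.
Proof. induction m; simpl; try rewrite IHm; lra. Qed.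

Lemma rsum_nonneg m g : (forall t, 0 <= g t) -> 0 <= rsum m g.
Proof. intros H; induction m; simpl. lra. specialize (H m). lra. Qed.

Lemma rsum_mono M N g : (forall t, 0 <= g t) -> (M <= N)%nat -> rsum M g <= rsum N g.
Proof. intros H HMN. induction HMN. lra. simpl. specialize (H m). lra. Qed.

Lemma rsum_add a b g : rsum (a + b) g = rsum a g + rsum b (fun r => g (a + r)%nat).
Proof. induction b; simpl. rewrite Nat.add_0_r; lra. rewrite Nat.add_succ_r. simpl. rewrite IHb. lra. Qed.

Lemma rsum_double n I g : rsum (n * I) g = rsum I (fun i => rsum n (fun r => g (n * i + r)%nat)).
Proof. induction I. rewrite Nat.mul_0_r. reflexivity.
  replace (n * S I)%nat with (n * I + n)%nat by lia. rewrite rsum_add, IHI. reflexivity. Qed.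

Lemma rsum_sq_bound n t : (rsum n t) ^ 2 <= 2 ^ n * rsum n (fun r => t r ^ 2).
Proof. induction n; cbn [rsum]. simpl; lra. replace (2 ^ S n) with (2 * 2 ^ n) by (simpl; ring).
  assert (0 <= rsum n (fun r => t r ^ 2)) by (apply rsum_nonneg; intros; nra).
  assert (1 <= 2 ^ n) by (apply pow_R1_Rle; lra).
  assert ((rsum n t + t n) ^ 2 <= 2 * (rsum n t) ^ 2 + 2 * (t n) ^ 2) by (pose proof (pow2_ge_0 (rsum n t - t n)); nra).
  assert (2 * t n ^ 2 <= 2 * 2 ^ n * t n ^ 2) by (assert (0 <= t n ^ 2) by nra; nra).
  nra. Qed.

Lemma sum_n_rsum (a : nat -> R) N : sum_n a N = rsum (S N) a.
Proof. induction N. rewrite sum_O. simpl. lra. rewrite sum_Sn, IHN. simpl. reflexivity. Qed.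

Definition PB (u : seqC) (B : R) : Prop := forall N, rsum N (fun j => Cmod (u j) ^ 2) <= B.

Lemma PB_ext u v B : (forall j, u j = v j) -> PB u B -> PB v B.
Proof. intros E H N. erewrite rsum_ext. apply (H N). intros. simpl. rewrite E. reflexivity. Qed.

Lemma PB_lin u v a b A B : PB u A -> PB v B ->
  PB (fun i => a * u i + b * v i)%C (2 * Cmod a ^ 2 * A + 2 * Cmod b ^ 2 * B).
Proof. intros HA HB N. eapply Rle_trans.
  apply (rsum_le N _ (fun j => 2 * Cmod a ^ 2 * (Cmod (u j) ^ 2) + 2 * Cmod b ^ 2 * (Cmod (v j) ^ 2))).
  { intros j _. pose proof (Cmod_triangle (a * u j) (b * v j)). rewrite !Cmod_mult in H.
    pose proof (Cmod_ge_0 (a * u j + b * v j)%C). pose proof (Cmod_ge_0 a). pose proof (Cmod_ge_0 b).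
    pose proof (Cmod_ge_0 (u j)). pose proof (Cmod_ge_0 (v j)).
    assert (Cmod (a * u j + b * v j)%C ^ 2 <= (Cmod a * Cmod (u j) + Cmod b * Cmod (v j)) ^ 2).
    { apply pow_incr. split; auto. }
    set (x := Cmod a * Cmod (u j)) in *. set (y := Cmod b * Cmod (v j)) in *.
    assert ((x + y) ^ 2 <= 2 * x ^ 2 + 2 * y ^ 2) by (pose proof (pow2_ge_0 (x - y)); nra).
    assert (x ^ 2 = Cmod a ^ 2 * Cmod (u j) ^ 2) by (unfold x; ring).
    assert (y ^ 2 = Cmod b ^ 2 * Cmod (v j) ^ 2) by (unfold y; ring). lra. }
  rewrite rsum_plus, !rsum_scal. specialize (HA N). specialize (HB N).
  assert (0 <= Cmod a ^ 2) by nra. assert (0 <= Cmod b ^ 2) by nra. nra. Qed.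

Lemma PB_inH2 u B : PB u B -> inH2 u.
Proof. intros H. unfold inH2.
  destruct (ex_finite_lim_seq_incr (sum_n (fun j => Cmod (u j) ^ 2)) B) as [l Hl].
  - intros N. rewrite !sum_n_rsum. simpl. assert (0 <= Cmod (u (S N)) ^ 2) by (apply pow2_ge_0). lra.
  - intros N. rewrite sum_n_rsum. apply H.
  - exists l. apply Hl.
Qed.

Lemma inH2_PB u : inH2 u -> PB u (Series (fun j => Cmod (u j) ^ 2)).
Proof. intros [l Hl]. rewrite (is_series_unique _ _ Hl). intros N.
  destruct N. simpl. assert (0 <= Cmod (u O) ^ 2) by apply pow2_ge_0.
  assert (sum_n (fun j => Cmod (u j) ^ 2) 0 <= l).
  { apply is_lim_seq_incr_compare. apply Hl. intros M. rewrite !sum_n_rsum. simpl. assert (0 <= Cmod (u (S M)) ^ 2) by (apply pow2_ge_0). lra. }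
  rewrite sum_O in H0. lra.
  rewrite <- sum_n_rsum. apply is_lim_seq_incr_compare. apply Hl. intros M. rewrite !sum_n_rsum. simpl. assert (0 <= Cmod (u (S M)) ^ 2) by (apply pow2_ge_0). lra.
Qed.

Lemma PB_of_norm u eps : inH2 u -> H2norm u < eps -> PB u (eps ^ 2).
Proof. intros Hu Hn. pose proof (inH2_PB u Hu) as H. unfold H2norm in Hn.
  set (S := Series (fun j => Cmod (u j) ^ 2)) in *.
  assert (0 <= S) by (apply (Rle_trans _ _ _ (Rle_refl (rsum 0 (fun j => Cmod (u j) ^ 2)))); apply H).
  pose proof (sqrt_sqrt S H0). pose proof (sqrt_pos S).
  assert (sqrt S * sqrt S <= eps * eps) by (apply Rmult_le_compat; lra).
  intros N. eapply Rle_trans. apply H. replace (eps ^ 2) with (eps * eps) by ring. lra. Qed.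

Lemma sumsq_bound N : rsum N (fun j => / (INR j + 1) ^ 2) <= 2 - 2 / (INR N + 1).
Proof. induction N; cbn [rsum]. simpl. lra.
  rewrite S_INR. pose proof (pos_INR N).
  assert (/ (INR N + 1) ^ 2 <= 2 / (INR N + 1) - 2 / (INR N + 1 + 1)).
  { apply (Rmult_le_reg_l ((INR N + 1) ^ 2 * (INR N + 1 + 1))). nra.
    field_simplify; try lra. }
  lra. Qed.

Lemma PB_h2 : PB (hk 2) 8.
Proof. intros N. eapply Rle_trans.
  apply (rsum_le N _ (fun j => 4 * / (INR j + 1) ^ 2)).
  { intros j _. unfold hk. rewrite Cmod_R. pose proof (h2_bound j). pose proof (pos_INR j).
    pose proof (Rabs_pos (sum_f_R0 (logcoef 2) j)).
    assert (Rabs (sum_f_R0 (logcoef 2) j) ^ 2 <= (2 / (INR j + 1)) ^ 2) by (apply pow_incr; lra).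
    eapply Rle_trans. apply H2. right. field. lra. }
  rewrite rsum_scal. pose proof (sumsq_bound N). pose proof (pos_INR N).
  assert (0 < 2 / (INR N + 1)) by (apply Rdiv_lt_0_compat; lra). lra. Qed.


Lemma csum_ext m g1 g2 : (forall t, (t < m)%nat -> g1 t = g2 t) -> csum m g1 = csum m g2.
Proof. induction m; simpl; intros H; auto. rewrite IHm by (intros; apply H; lia). rewrite H by lia. auto. Qed.

Lemma csum_plus m g1 g2 : csum m (fun t => g1 t + g2 t)%C = (csum m g1 + csum m g2)%C.
Proof. induction m; simpl. ring. rewrite IHm. ring. Qed.

Lemma csum_minus m g1 g2 : csum m (fun t => g1 t - g2 t)%C = (csum m g1 - csum m g2)%C.
Proof. induction m; simpl. ring. rewrite IHm. ring. Qed.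

Lemma csum_scal m c g : csum m (fun t => c * g t)%C = (c * csum m g)%C.
Proof. induction m; simpl. ring. rewrite IHm. ring. Qed.

Lemma csum_mulr m c g : (csum m g * c)%C = csum m (fun t => g t * c)%C.
Proof. induction m; simpl. ring. rewrite <- IHm. ring. Qed.

Lemma csum_add a b g : csum (a + b) g = (csum a g + csum b (fun r => g (a + r)%nat))%C.
Proof. induction b; simpl. rewrite Nat.add_0_r; ring. rewrite Nat.add_succ_r. simpl. rewrite IHb. ring. Qed.

Lemma csum_double n I g : csum (n * I) g = csum I (fun i => csum n (fun r => g (n * i + r)%nat)).
Proof. induction I. rewrite Nat.mul_0_r. reflexivity.
  replace (n * S I)%nat with (n * I + n)%nat by lia. rewrite csum_add, IHI. reflexivity. Qed.

Lemma Cmod_csum m g : Cmod (csum m g) <= rsum m (fun t => Cmod (g t)).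
Proof. induction m; simpl. rewrite Cmod_0. lra.
  pose proof (Cmod_triangle (csum m g) (g m)). lra. Qed.

Lemma sum_n_csum (a : nat -> C) N : sum_n a N = csum (S N) a.
Proof. induction N. rewrite sum_O. simpl. ring. rewrite sum_Sn, IHN. reflexivity. Qed.

Section WithN.
Variable n : nat.
Hypothesis Hn : (2 <= n)%nat.
Notation T := (Wn_adj n).

Lemma T_lin a x y : T (fun i => a * x i + y i)%C = (fun i => a * T x i + T y i)%C.
Proof. apply functional_extensionality. intros i. unfold Wn_adj. rewrite csum_plus, csum_scal. reflexivity. Qed.

Lemma T_sub x y : T (fun i => x i - y i)%C = (fun i => T x i - T y i)%C.
Proof. apply functional_extensionality. intros i. unfold Wn_adj. rewrite csum_minus. reflexivity. Qed.

Lemma PB_T u B : PB u B -> PB (T u) (2 ^ n * B).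
Proof. intros H I. eapply Rle_trans.
  apply (rsum_le I _ (fun i => 2 ^ n * rsum n (fun r => Cmod (u (n * i + r)%nat) ^ 2))).
  { intros i _. unfold Wn_adj. eapply Rle_trans. 2: apply rsum_sq_bound.
    apply pow_incr. split. apply Cmod_ge_0. apply Cmod_csum. }
  rewrite rsum_scal. rewrite <- (rsum_double n I (fun j => Cmod (u j) ^ 2)).
  apply Rmult_le_compat_l. apply pow_le; lra. apply H. Qed.

Lemma PB_iter u B j : PB u B -> exists B', PB (Nat.iter j T u) B'.
Proof. intros H. induction j. exists B. exact H. destruct IHj as [B' HB']. exists (2 ^ n * B'). simpl. apply PB_T. auto. Qed.

Lemma PB_le u A B : PB u A -> A <= B -> PB u B.
Proof. intros H HAB N. specialize (H N). lra. Qed.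

Fixpoint Kc (cs : list C) : R :=
  match cs with nil => 0 | cons c cs' => 2 * Cmod c ^ 2 + 2 * (Kc cs' * 2 ^ n) end.

Lemma Kc_nonneg cs : 0 <= Kc cs.
Proof. induction cs; simpl. lra. assert (0 <= Cmod a ^ 2) by apply pow2_ge_0.
  assert (0 < 2 ^ n) by (apply pow_lt; lra). nra. Qed.

Lemma PB_poly cs u B : PB u B -> PB (polyapp T cs u) (Kc cs * B).
Proof. revert u B. induction cs as [|c cs IH]; intros u B H; simpl.
  - intros N. rewrite (rsum_ext N _ (fun _ => 0)). 2:{ intros. rewrite Cmod_0. ring. }
    assert (rsum N (fun _ => 0) = 0) as -> by (induction N; simpl; lra). lra.
  - pose proof (IH (T u) _ (PB_T u B H)) as H2.
    pose proof (PB_lin u (polyapp T cs (T u)) c 1 _ _ H H2) as H3.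
    eapply PB_ext. 2: eapply PB_le. 2: apply H3. intros j. simpl. ring.
    rewrite Cmod_1. right. ring. Qed.

Lemma polyapp_T cs x : T (polyapp T cs x) = polyapp T cs (T x).
Proof. revert x. induction cs as [|c cs IH]; intros x; simpl.
  - apply functional_extensionality. intros i. unfold Wn_adj. clear Hn. generalize n. intros m. induction m; simpl. reflexivity.
    rewrite IHm. ring.
  - rewrite T_lin. rewrite IH. reflexivity. Qed.

Lemma polyapp_iter j cs x : Nat.iter j T (polyapp T cs x) = polyapp T cs (Nat.iter j T x).
Proof. induction j; simpl. reflexivity. rewrite IHj. apply polyapp_T. Qed.

Lemma polyapp_sub cs x y i : polyapp T cs (fun i => x i - y i)%C i = (polyapp T cs x i - polyapp T cs y i)%C.
Proof. revert x y. induction cs as [|c cs IH]; intros x y; simpl. ring.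
  rewrite T_sub. rewrite IH. ring. Qed.

End WithN.


Lemma logcoef_S k m : logcoef k (S m) = / INR (S m) - (if Nat.eqb (S m mod k) 0 then INR k / INR (S m) else 0).
Proof. reflexivity. Qed.

Section Id.
Variables n k : nat.
Hypothesis Hn : (1 <= n)%nat.
Hypothesis Hk : (1 <= k)%nat.

Definition D (j : nat) : R := sum_f_R0 (logcoef (n * k)) j - sum_f_R0 (logcoef n) j.

Lemma D_inner q : D (n * q) = sum_f_R0 (logcoef k) q ->
  forall r, (r < n)%nat -> D (n * q + r) = sum_f_R0 (logcoef k) q.
Proof. intros H0 r. induction r; intros Hr. rewrite Nat.add_0_r; auto.
  rewrite <- IHr by lia. unfold D. rewrite Nat.add_succ_r, !tech5, !logcoef_S.
  assert (E : (S (n * q + r) mod n) = S r).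
  { replace (S (n * q + r)) with (S r + q * n)%nat by lia. rewrite Nat.Div0.mod_add. apply Nat.mod_small. lia. }
  assert (E2 : (S (n * q + r) mod (n * k) <> 0)%nat).
  { intros Hc. apply Nat.Lcm0.mod_divide in Hc. assert (Nat.divide n (S (n * q + r))).
    { eapply Nat.divide_trans. 2: apply Hc. exists k. lia. }
    apply Nat.Lcm0.mod_divide in H. lia. }
  rewrite E. apply Nat.eqb_neq in E2. rewrite E2. simpl Nat.eqb. cbv iota. ring. Qed.

Lemma D_id q r : (r < n)%nat -> D (n * q + r) = sum_f_R0 (logcoef k) q.
Proof. revert r. induction q; intros r Hr; apply D_inner; auto.
  - rewrite Nat.mul_0_r. unfold D, sum_f_R0, logcoef. rewrite mult_INR.
    assert (1 <= INR n) by (apply (le_INR 1); lia). assert (1 <= INR k) by (apply (le_INR 1); lia).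
    rewrite ln_mult by lra. ring.
  - replace (n * S q)%nat with (S (n * q + (n - 1))) by lia.
    assert (DS : forall N, D (S N) = D N + (logcoef (n * k) (S N) - logcoef n (S N))) by (intros; unfold D; rewrite !tech5; ring).
    rewrite DS, IHq by lia.
    rewrite tech5. rewrite !logcoef_S.
    replace (S (n * q + (n - 1))) with (n * S q)%nat by lia.
    assert (E : ((n * S q) mod n) = 0%nat).
    { rewrite Nat.mul_comm. apply Nat.Div0.mod_mul. }
    rewrite E. simpl Nat.eqb. cbv iota.
    rewrite Nat.Div0.mul_mod_distr_l.
    assert (HI : INR (n * S q) = INR n * INR (S q)) by apply mult_INR.
    rewrite HI. rewrite mult_INR.
    assert (1 <= INR n) by (apply (le_INR 1); lia). assert (1 <= INR (S q)) by (apply (le_INR 1); lia).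
    destruct (Nat.eqb_spec (S q mod k) 0) as [Z|Z].
    + rewrite Z. rewrite Nat.mul_0_r. simpl Nat.eqb. cbv iota. field. lra.
    + assert ((n * (S q mod k) =? 0)%nat = false) as -> by (apply Nat.eqb_neq; nia). field. lra.
Qed.
End Id.

Lemma hk_id n k q r : (1 <= n)%nat -> (1 <= k)%nat -> (r < n)%nat ->
  Cminus (hk (n * k)%nat (n * q + r)%nat) (hk n (n * q + r)%nat) = hk k q.
Proof. intros. unfold hk. rewrite <- RtoC_minus. f_equal. apply D_id; auto. Qed.

Lemma hk_conj k j : Cconj (hk k j) = hk k j.
Proof. unfold hk, Cconj, RtoC. simpl. f_equal. ring. Qed.

Lemma regroup n (a : nat -> C) L : (1 <= n)%nat -> is_series a L ->
  is_series (fun i => csum n (fun r => a (n * i + r)%nat)) L.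
Proof. intros Hn H. unfold is_series in *.
  eapply filterlim_ext.
  { intros I. symmetry. rewrite sum_n_csum. rewrite <- csum_double.
    replace (n * S I)%nat with (S (pred (n * S I))) by nia. rewrite <- sum_n_csum. reflexivity. }
  eapply filterlim_comp. 2: exact H.
  intros P [N HN]. exists N. intros I HI. apply HN. nia. Qed.

Definition Orth (u : seqC) : Prop :=
  forall k, (2 <= k)%nat -> is_series (fun j => u j * Cconj (hk k j))%C (RtoC 0).

Lemma Orth_T n u : (2 <= n)%nat -> Orth u -> Orth (Wn_adj n u).
Proof. intros Hn H k Hk.
  pose proof (H (n * k)%nat ltac:(nia)) as H1. pose proof (H n Hn) as H2.
  pose proof (is_series_minus _ _ _ _ H1 H2) as H3.
  pose proof (regroup n _ _ ltac:(lia) H3) as H4.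
  assert (HL : forall (a : nat -> C) l l', is_series a l -> l = l' -> is_series a l') by (intros; subst; auto).
  eapply HL.
  { eapply is_series_ext. 2: exact H4. intros i. simpl.
    unfold Wn_adj. rewrite hk_conj. rewrite csum_mulr. apply csum_ext. intros r Hr.
    rewrite !hk_conj. rewrite <- (hk_id n k i r) by lia.
    change (plus ?x (opp ?y)) with (Cminus x y). ring. }
  change (@eq C (Cplus (RtoC 0) (Copp (RtoC 0))) (RtoC 0)). ring. Qed.

Lemma Orth_iter n u j : (2 <= n)%nat -> Orth u -> Orth (Nat.iter j (Wn_adj n) u).
Proof. intros Hn H. induction j; simpl; auto. apply Orth_T; auto. Qed.


Definition ev (m : nat) : seqC := fun i => if Nat.eqb i m then RtoC 1 else RtoC 0.

Lemma csum_ind a N m : csum N (fun r => if Nat.eqb (a + r) m then RtoC 1 else RtoC 0)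
  = if andb (Nat.leb a m) (Nat.ltb m (a + N)) then RtoC 1 else RtoC 0.
Proof. induction N; simpl.
  - destruct (Nat.leb_spec a m); destruct (Nat.ltb_spec m (a + 0)); simpl; try reflexivity; lia.
  - rewrite IHN. destruct (Nat.eqb_spec (a + N) m); destruct (Nat.leb_spec a m);
    destruct (Nat.ltb_spec m (a + N)); destruct (Nat.ltb_spec m (a + S N)); simpl;
    try (exfalso; lia); ring.
Qed.

Lemma T_ev n m : (1 <= n)%nat -> Wn_adj n (ev m) = ev (m / n).
Proof. intros Hn. apply functional_extensionality. intros i. unfold Wn_adj, ev.
  rewrite csum_ind. pose proof (Nat.div_mod m n ltac:(lia)). pose proof (Nat.mod_upper_bound m n ltac:(lia)).
  set (q := (m / n)%nat) in *. set (s := (m mod n)%nat) in *.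
  destruct (Nat.eqb_spec i q).
  - subst i. replace (Nat.leb (n * q) m) with true by (symmetry; apply Nat.leb_le; lia).
    replace (Nat.ltb m (n * q + n)) with true by (symmetry; apply Nat.ltb_lt; lia). reflexivity.
  - destruct (Nat.leb_spec (n * i) m); destruct (Nat.ltb_spec m (n * i + n)); simpl; try reflexivity.
    exfalso. assert (i < q \/ q < i)%nat as [Hl|Hl] by lia; nia.
Qed.

Lemma rsum_ev m N : rsum N (fun j => Cmod (ev m j) ^ 2) = if Nat.ltb m N then 1 else 0.
Proof. induction N. simpl. destruct m; reflexivity. cbn [rsum]. rewrite IHN. unfold ev.
  destruct (Nat.eqb_spec N m); destruct (Nat.ltb_spec m N); destruct (Nat.ltb_spec m (S N));
  try (exfalso; lia); rewrite ?Cmod_1, ?Cmod_0; ring. Qed.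

Lemma PB_ev m : PB (ev m) 1.
Proof. intros N. rewrite rsum_ev. destruct (Nat.ltb m N); lra. Qed.

Lemma csum_ev m N z : csum N (fun i => ev m i * z i)%C = if Nat.ltb m N then z m else RtoC 0.
Proof. induction N; simpl. reflexivity. rewrite IHN. unfold ev.
  destruct (Nat.eqb_spec N m); destruct (Nat.ltb_spec m N); destruct (Nat.ltb_spec m (S N));
  try (exfalso; lia); subst; ring. Qed.

Fixpoint V (n : nat) (cs : list C) (m : nat) : C :=
  match cs with nil => RtoC 0 | cons c cs' => (c * hk 2 m + V n cs' (m / n))%C end.

Lemma psum_poly n cs m N : (1 <= n)%nat -> (m < N)%nat ->
  csum N (fun i => polyapp (Wn_adj n) cs (ev m) i * Cconj (hk 2 i))%C = V n cs m.
Proof. intros Hn. revert m. induction cs as [|c cs IH]; intros m Hm; simpl.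
  - clear Hm. induction N; simpl. reflexivity. rewrite IHN. ring.
  - rewrite T_ev by auto.
    rewrite (csum_ext N _ (fun i => c * (ev m i * Cconj (hk 2 i)) + polyapp (Wn_adj n) cs (ev (m / n)) i * Cconj (hk 2 i))%C).
    2:{ intros. ring. }
    rewrite csum_plus, csum_scal, csum_ev, IH.
    + destruct (Nat.ltb_spec m N); try lia. rewrite hk_conj. reflexivity.
    + pose proof (Nat.div_mod m n ltac:(lia)). nia.
Qed.

Lemma hk2_1 : hk 2%nat 1%nat = (hk 2%nat 0%nat + 1)%C.
Proof. unfold hk. rewrite <- RtoC_plus. f_equal.
  change (sum_f_R0 (logcoef 2) 1) with (sum_f_R0 (logcoef 2) 0 + logcoef 2 1).
  replace (logcoef 2 1) with 1. ring. unfold logcoef. simpl. lra. Qed.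

Lemma V_zero n cs : (2 <= n)%nat -> (forall m, V n cs m = RtoC 0) -> List.Forall (fun c => c = RtoC 0) cs.
Proof. intros Hn. induction cs as [|c cs IH]; intros H. constructor.
  pose proof (H 1%nat) as H1. pose proof (H 0%nat) as H0. simpl in H1, H0.
  rewrite Nat.div_small in H1 by lia. rewrite Nat.Div0.div_0_l in H0. rewrite hk2_1 in H1.
  assert (Hc : c = RtoC 0).
  { replace c with ((c * (hk 2 0%nat + 1) + V n cs 0%nat) - (c * hk 2 0%nat + V n cs 0%nat))%C by ring.
    rewrite H1, H0. ring. }
  constructor; auto. apply IH. intros m'. pose proof (H (n * m')%nat) as Hm. simpl in Hm.
  rewrite Nat.mul_comm, Nat.div_mul in Hm by lia. rewrite Hc in Hm. rewrite <- Hm. ring. Qed.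

Lemma polyapp_zero T cs x : List.Forall (fun c => c = RtoC 0) cs -> polyapp T cs x = (fun _ => RtoC 0).
Proof. intros H. revert x. induction H as [|c0 cs0 Hc0 Hcs IH]; intros x; simpl. reflexivity.
  rewrite IH. apply functional_extensionality. intros i. subst. ring. Qed.

Lemma cont_bound y h A H M lam : PB y A -> PB h H -> 0 < lam ->
  Cmod (csum M (fun i => y i * Cconj (h i))%C) <= (lam * A + H / lam) / 2.
Proof. intros HA HH Hl. eapply Rle_trans. apply Cmod_csum.
  eapply Rle_trans. apply (rsum_le M _ (fun i => (lam * Cmod (y i) ^ 2 + / lam * Cmod (h i) ^ 2) / 2)).
  { intros i _. rewrite Cmod_mult, Cmod_conj.
    pose proof (pow2_ge_0 (lam * Cmod (y i) - Cmod (h i))).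
    apply (Rmult_le_reg_l (2 * lam)). lra.
    replace (2 * lam * ((lam * Cmod (y i) ^ 2 + / lam * Cmod (h i) ^ 2) / 2)) with
      (lam * lam * Cmod (y i) ^ 2 + Cmod (h i) ^ 2) by (field; lra). nra. }
  rewrite (rsum_ext M _ (fun i => / 2 * lam * Cmod (y i) ^ 2 + / 2 * / lam * Cmod (h i) ^ 2)).
  2:{ intros. field. lra. }
  rewrite rsum_plus.
  rewrite !rsum_scal. specialize (HA M). specialize (HH M).
  assert (0 < / lam) by (apply Rinv_0_lt_compat; lra).
  unfold Rdiv. nra. Qed.


Lemma small_zero z C : 0 <= z -> 0 < C -> (forall eps, 0 < eps -> z <= C * eps) -> z = 0.
Proof. intros Hz HC H. destruct (Rle_lt_or_eq_dec 0 z Hz) as [Hp|]; auto.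
  specialize (H (z / (2 * C)) ltac:(apply Rdiv_lt_0_compat; lra)).
  replace (C * (z / (2 * C))) with (z / 2) in H by (field; lra). lra. Qed.

Theorem mainTheorem20 (n : nat) (f : seqC) :
  (2 <= n)%nat ->
  hypercyclic (Wn_adj n) f ->
  forall cs : list C,
    inNperp (polyapp (Wn_adj n) cs f) ->
    polyapp (Wn_adj n) cs f = (fun _ => 0%C).
Proof.
  intros Hn [Hf Hdense] cs [Hg Horth].
  apply polyapp_zero. apply (V_zero n); auto. intros m.
  apply Cmod_eq_0.
  pose proof (Kc_nonneg n cs) as HK.
  apply (small_zero _ (sqrt 2 + (Kc n cs + 8) / 2)). apply Cmod_ge_0.
  { pose proof Rlt_sqrt2_0. lra. }
  intros eps He.
  destruct (Hdense (ev m) (PB_inH2 _ _ (PB_ev m)) eps He) as [j Hj].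
  set (x := Nat.iter j (Wn_adj n) f) in *.
  destruct (PB_iter n f _ j (inH2_PB f Hf)) as [Bx HBx].
  assert (Hd : inH2 (fun i => x i - ev m i)%C).
  { eapply PB_inH2. eapply PB_ext. 2: apply (PB_lin x (ev m) 1 (-1) _ _ HBx (PB_ev m)).
    intros i. simpl. ring. }
  pose proof (PB_of_norm _ eps Hd Hj) as HPd.
  pose proof (PB_poly n cs _ _ HPd) as HPy.
  assert (Horth' : Orth (polyapp (Wn_adj n) cs x)).
  { unfold x. rewrite <- polyapp_iter. apply Orth_iter; auto. }
  pose proof (Horth' 2%nat (le_n 2)) as Hs.
  unfold is_series in Hs. pose proof (proj1 (@filterlim_locally nat C_UniformSpace eventually _ _ _) Hs) as Hs2. clear Hs. rename Hs2 into Hs.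
  destruct (Hs (mkposreal eps He)) as [N0 HN0].
  set (N := Nat.max N0 m).
  specialize (HN0 N ltac:(lia)).
  apply C_NormedModule_mixin_compat2 in HN0. simpl in HN0.
  change (minus ?a ?b) with (Cminus a b) in HN0.
  rewrite sum_n_csum in HN0.
  replace (csum (S N) _ - 0)%C with (csum (S N) (fun j0 => polyapp (Wn_adj n) cs x j0 * Cconj (hk 2 j0)))%C in HN0 by ring.
  pose proof (cont_bound _ _ _ _ (S N) (/ eps) HPy PB_h2 ltac:(apply Rinv_0_lt_compat; lra)) as Hc.
  rewrite (csum_ext _ _ (fun i => polyapp (Wn_adj n) cs x i * Cconj (hk 2 i) - polyapp (Wn_adj n) cs (ev m) i * Cconj (hk 2 i))%C) in Hc.
  2:{ intros t _. rewrite polyapp_sub. ring. }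
  rewrite csum_minus in Hc. rewrite psum_poly in Hc by lia.
  set (A := csum (S N) (fun j0 => polyapp (Wn_adj n) cs x j0 * Cconj (hk 2 j0))%C) in *.
  replace (V n cs m) with (A - (A - V n cs m))%C by ring.
  eapply Rle_trans. apply Cmod_triangle. rewrite Cmod_opp.
  replace (/ eps * (Kc n cs * eps ^ 2) + 8 / / eps) with ((Kc n cs + 8) * eps) in Hc by (field; lra).
  lra.
Qed.
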